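(* Let $k$ be a field, $V$ an infinite-dimensional $k$-vector space, $E=\mathrm{End}_k(V)$, $S\subseteq E$ the two-sided ideal of endomorphisms of finite rank, and $R=k+S\subseteq E$ (where $k$ is identified with scalar multiples of the identity). Then the only two-sided ideals of $R$ are $0$, $S$ and $R$; $R$ is a prime ring which is both right and left almost perfect; the Jacobson radical $J(R)$ is $0$; and $R$ is not semilocal, hence is neither right perfect nor left perfect.
   Context: Rings are associative with identity. A ring $R$ is right (resp. left) almost perfect if $R/I$ is a right (resp. left) perfect ring for every two-sided ideal $I$ of $R$ with $I\neq 0$, $I\neq R$. A ring is semilocal if $R/J(R)$ is semisimple artinian. *)

(* Defs.v *)
(* Ring-theoretic notions are stated for a ring given as a
   predicate [P] on the type [V -> V] of self-maps of a vector space, with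
   pointwise addition and composition as multiplication.  Quotient rings P/I
   are handled through the correspondence (literal for subsets of P/I) between
   subsets of P/I and I-saturated subsets of P: right ideals of P/I are right
   ideals of P containing I, and x = 0 in P/I means x \in I. *)
From HB Require Import structures.
From mathcomp Require Import all_boot all_order all_algebra.
Set Implicit Arguments. Unset Strict Implicit. Unset Printing Implicit Defensive.
Import GRing.Theory.
Local Open Scope ring_scope.

Definition eadd {V : zmodType} (f g : V -> V) : V -> V := fun v => f v + g v.
Definition eopp {V : zmodType} (f : V -> V) : V -> V := fun v => - f v.
Definition ezero {V : zmodType} : V -> V := fun _ => 0.
Definition emul {V : zmodType} (f g : V -> V) : V -> V := fun v => f (g v).
Definition eone {V : zmodType} : V -> V := fun v => v.
Definition escal {k : pzRingType} {V : lmodType k} (c : k) : V -> V :=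
  fun v => c *: v.

Definition is_ideal {V : zmodType} (P I : (V -> V) -> Prop) : Prop :=
  (forall x, I x -> P x) /\ I ezero /\
  (forall x y, I x -> I y -> I (eadd x y)) /\
  (forall x, I x -> I (eopp x)) /\
  (forall r x, P r -> I x -> I (emul r x)) /\
  (forall r x, P r -> I x -> I (emul x r)).

Definition zero_ideal {V : zmodType} : (V -> V) -> Prop := fun x => x = ezero.

(* right (resp. left) ideal of the quotient ring P/I, viewed as an
   I-saturated subset of P *)
Definition is_rideal_mod {V : zmodType} (P I A : (V -> V) -> Prop) : Prop :=
  [/\ (forall x, A x -> P x), (forall x, I x -> A x),
      (forall x y, A x -> A y -> A (eadd x y)),
      (forall x, A x -> A (eopp x)) &
      (forall a r, A a -> P r -> A (emul a r))].

Definition is_lideal_mod {V : zmodType} (P I A : (V -> V) -> Prop) : Prop :=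
  [/\ (forall x, A x -> P x), (forall x, I x -> A x),
      (forall x y, A x -> A y -> A (eadd x y)),
      (forall x, A x -> A (eopp x)) &
      (forall a r, A a -> P r -> A (emul r a))].

Definition maximal_rideal_mod {V : zmodType} (P I M : (V -> V) -> Prop) : Prop :=
  [/\ is_rideal_mod P I M, ~ M eone &
      forall N, is_rideal_mod P I N -> (forall x, M x -> N x) -> ~ N eone ->
        forall x, N x -> M x].

(* Jacobson radical of P/I: intersection of the maximal right ideals
   (as a subset of P, i.e. its preimage) *)
Definition Jac_mod {V : zmodType} (P I : (V -> V) -> Prop) : (V -> V) -> Prop :=
  fun x => P x /\ forall M, maximal_rideal_mod P I M -> M x.

Definition semisimple_mod {V : zmodType} (P K : (V -> V) -> Prop) : Prop :=
  forall A, is_rideal_mod P K A ->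
    exists B, [/\ is_rideal_mod P K B,
      (forall x, P x -> exists a b, [/\ A a, B b & x = eadd a b]) &
      (forall x, A x -> B x -> K x)].

Definition rartinian_mod {V : zmodType} (P K : (V -> V) -> Prop) : Prop :=
  forall A : nat -> (V -> V) -> Prop,
    (forall n, is_rideal_mod P K (A n)) ->
    (forall n x, A n.+1 x -> A n x) ->
    exists N, forall n, (N <= n)%N -> forall x, A N x -> A n x.

Definition semisimple_artinian_mod {V : zmodType} (P K : (V -> V) -> Prop) :=
  semisimple_mod P K /\ rartinian_mod P K.

Definition semilocal_mod {V : zmodType} (P I : (V -> V) -> Prop) : Prop :=
  semisimple_artinian_mod P (Jac_mod P I).

Fixpoint rprod {V : zmodType} (a : nat -> V -> V) (n : nat) : V -> V :=
  match n with 0 => a 0%N | m.+1 => emul (a m.+1) (rprod a m) end.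
Fixpoint lprod {V : zmodType} (a : nat -> V -> V) (n : nat) : V -> V :=
  match n with 0 => a 0%N | m.+1 => emul (lprod a m) (a m.+1) end.

(* T-nilpotence of a subset J of P/I (zero in P/I means membership in I) *)
Definition rTnilpotent_mod {V : zmodType} (I J : (V -> V) -> Prop) : Prop :=
  forall a : nat -> V -> V, (forall n, J (a n)) -> exists n, I (rprod a n).
Definition lTnilpotent_mod {V : zmodType} (I J : (V -> V) -> Prop) : Prop :=
  forall a : nat -> V -> V, (forall n, J (a n)) -> exists n, I (lprod a n).

(* (Lam) right perfect: semilocal with right T-nilpotent radical *)
Definition rperfect_mod {V : zmodType} (P I : (V -> V) -> Prop) : Prop :=
  semilocal_mod P I /\ rTnilpotent_mod I (Jac_mod P I).
Definition lperfect_mod {V : zmodType} (P I : (V -> V) -> Prop) : Prop :=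
  semilocal_mod P I /\ lTnilpotent_mod I (Jac_mod P I).

Definition Jac {V : zmodType} (P : (V -> V) -> Prop) := Jac_mod P zero_ideal.
Definition semilocal {V : zmodType} (P : (V -> V) -> Prop) :=
  semilocal_mod P zero_ideal.
Definition rperfect {V : zmodType} (P : (V -> V) -> Prop) :=
  rperfect_mod P zero_ideal.
Definition lperfect {V : zmodType} (P : (V -> V) -> Prop) :=
  lperfect_mod P zero_ideal.

Definition ralmost_perfect {V : zmodType} (P : (V -> V) -> Prop) : Prop :=
  forall I, is_ideal P I -> ~ (forall x, I x <-> x = ezero) ->
    ~ (forall x, P x -> I x) -> rperfect_mod P I.
Definition lalmost_perfect {V : zmodType} (P : (V -> V) -> Prop) : Prop :=
  forall I, is_ideal P I -> ~ (forall x, I x <-> x = ezero) ->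
    ~ (forall x, P x -> I x) -> lperfect_mod P I.

Definition prime_ring {V : zmodType} (P : (V -> V) -> Prop) : Prop :=
  eone <> ezero :> (V -> V) /\
  forall a b, P a -> P b -> (forall r, P r -> emul (emul a r) b = ezero) ->
    a = ezero \/ b = ezero.

Definition is_linear {k : pzRingType} {V : lmodType k} (f : V -> V) : Prop :=
  forall (a : k) (u v : V), f (a *: u + v) = a *: f u + f v.

Definition in_span {k : pzRingType} {V : lmodType k} (s : seq V) (v : V) : Prop :=
  exists c : 'I_(size s) -> k, v = \sum_(i < size s) c i *: nth 0 s i.

Definition infinite_dim {k : pzRingType} (V : lmodType k) : Prop :=
  forall s : seq V, exists v, ~ in_span s v.

Definition finite_rank {k : pzRingType} {V : lmodType k} (f : V -> V) : Prop :=
  exists s : seq V, forall v, in_span s (f v).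

Definition finrank_endo {k : pzRingType} (V : lmodType k) : (V -> V) -> Prop :=
  fun f => is_linear f /\ finite_rank f.
Arguments finrank_endo {k} V _.

Definition scalar_plus_finrank {k : pzRingType} (V : lmodType k)
  : (V -> V) -> Prop :=
  fun f => is_linear f /\
    exists c : k, finrank_endo V (eadd f (eopp (escal c))).
Arguments scalar_plus_finrank {k} V _.

(* Main.v *)
Require Import Defs.
From HB Require Import structures.
From mathcomp Require Import all_boot all_order all_algebra.
From Stdlib Require Import Classical FunctionalExtensionality PropExtensionality ClassicalEpsilon.
Set Implicit Arguments. Unset Strict Implicit.
Import GRing.Theory.
Local Open Scope ring_scope.

Definition sub {T : Type} (X Y : T -> Prop) := forall v, X v -> Y v.

Lemma pred_ext (T : Type) (X Y : T -> Prop) : sub X Y -> sub Y X -> X = Y.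
Proof.
move=> h1 h2; apply: functional_extensionality => v.
apply: propositional_extensionality; split; [exact: h1|exact: h2].
Qed.

Section Tukey.
Variables (T : Type) (P : (T -> Prop) -> Prop) (X0 : T -> Prop).
Definition bigU (C : (T->Prop)->Prop) : T -> Prop :=
  fun v => X0 v \/ exists X, C X /\ X v.
Hypothesis HP : forall C, (forall X, C X -> P X) ->
  (forall X Y, C X -> C Y -> sub X Y \/ sub Y X) -> P (bigU C).

Definition ext_ok (X Y : T -> Prop) := P Y /\ sub X Y /\ ~ sub Y X.
Definition gx (X : T -> Prop) : T -> Prop :=
  match excluded_middle_informative (exists Y, ext_ok X Y) with
  | left h => proj1_sig (constructive_indefinite_description _ h)
  | right _ => X end.

Lemma g_ok X : (exists Y, ext_ok X Y) -> ext_ok X (gx X).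
Proof.
rewrite /gx; case: excluded_middle_informative => // h _.
exact: proj2_sig (constructive_indefinite_description _ h).
Qed.

Lemma g_stop X : ~ (exists Y, ext_ok X Y) -> gx X = X.
Proof. by rewrite /gx; case: excluded_middle_informative. Qed.

Lemma g_infl X : sub X (gx X).
Proof.
case: (classic (exists Y, ext_ok X Y)) => h.
  by case: (g_ok h) => _ [].
by rewrite g_stop.
Qed.

Inductive tower : (T->Prop) -> Prop :=
 | tw_succ X : tower X -> tower (gx X)
 | tw_union C : (forall X, C X -> tower X) -> tower (bigU C).

Lemma tower_X0 X : tower X -> sub X0 X.
Proof.
elim=> [Y _ IH|C _ _] v h; first exact: g_infl (IH v h).
by left.
Qed.

Definition extreme X := forall Y, tower Y -> sub Y X -> ~ sub X Y -> sub (gx Y) X.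

Lemma lemA X : tower X -> extreme X -> forall Y, tower Y -> sub Y X \/ sub (gx X) Y.
Proof.
move=> tX eX Y; elim=> [Z tZ IH|C hC IH].
- case: IH => [hZX|hXZ].
  + case: (classic (sub X Z)) => hXZ.
      have -> : Z = X by apply: pred_ext.
      by right.
    by left; apply: eX.
  + by right => v /hXZ /g_infl.
- case: (classic (exists Z, C Z /\ sub (gx X) Z)) => [[Z [CZ hZ]]|hn].
    by right => v /hZ hv; right; exists Z.
  left => v [/(tower_X0 tX) //|[Z [CZ hv]]].
  case: (IH Z CZ) => [/(_ v hv) //|h].
  by case: hn; exists Z.
Qed.

Lemma lemB X : tower X -> extreme X.
Proof.
elim=> [X' tX IH|C hC IH].
- move=> Y tY hY hn.
  case: (lemA tX IH tY) => [hYX|hXY]; last by case: hn.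
  case: (classic (sub X' Y)) => h.
    have -> : Y = X' by apply: pred_ext.
    by [].
  by move=> v /(IH Y tY hYX h) /g_infl.
- move=> Y tY hY hn.
  have [v [Uv nYv]] : exists v, bigU C v /\ ~ Y v.
    apply: NNPP => hh; apply: hn => v Uv; apply: NNPP => nY; apply: hh; by exists v.
  case: Uv => [/(tower_X0 tY) //|[Z [CZ Zv]]].
  case: (lemA (hC Z CZ) (IH Z CZ) tY) => [hYZ|hZY]; last first.
    by case: nYv; apply: hZY; apply: g_infl.
  have := IH Z CZ Y tY hYZ (fun h => nYv (h v Zv)).
  by move=> h w /h Zw; right; exists Z.
Qed.

Lemma tchain X Y : tower X -> tower Y -> sub X Y \/ sub Y X.
Proof.
move=> tX tY; case: (lemA tX (lemB tX) tY) => h; first by right.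
by left => v /g_infl /h.
Qed.

Lemma tower_P X : tower X -> P X.
Proof.
elim=> [Y _ IH|C hC IH].
- case: (classic (exists Z, ext_ok Y Z)) => h; first by case: (g_ok h).
  by rewrite g_stop.
- apply: HP => // X1 Y1 h1 h2; exact: tchain (hC _ h1) (hC _ h2).
Qed.

Lemma tukey : exists M, P M /\ sub X0 M /\ forall Y, P Y -> sub M Y -> sub Y M.
Proof.
have tM : tower (bigU tower) by apply: tw_union.
exists (bigU tower); split; first exact: tower_P.
split; first by move=> v h; left.
move=> Y PY hMY; apply: NNPP => hn.
have [_ [_ hg]] := g_ok (ex_intro _ Y (conj PY (conj hMY hn))).
apply: hg => v h; right; exists (gx (bigU tower)); split => //.
exact: tw_succ.
Qed.
End Tukey.

Section Lin.
Variables (k : fieldType) (V : lmodType k).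

Lemma lin0 (f : V -> V) : is_linear f -> f 0 = 0.
Proof.
move=> h; have := h 1 0 0; rewrite !scale1r !addr0 => e.
by apply: (addrI (f 0)); rewrite addr0 -e.
Qed.

Lemma linD (f : V -> V) u v : is_linear f -> f (u + v) = f u + f v.
Proof. by move=> h; have := h 1 u v; rewrite !scale1r. Qed.

Lemma linZ (f : V -> V) a u : is_linear f -> f (a *: u) = a *: f u.
Proof. by move=> h; have := h a u 0; rewrite !addr0 lin0 // addr0. Qed.

Lemma linN (f : V -> V) u : is_linear f -> f (- u) = - f u.
Proof. by move=> h; rewrite -scaleN1r linZ // scaleN1r. Qed.

Lemma linB (f : V -> V) u v : is_linear f -> f (u - v) = f u - f v.
Proof. by move=> h; rewrite linD // linN. Qed.

Definition flin (f : V -> k) := forall a u v, f (a *: u + v) = a * f u + f v.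

Lemma flin0 f : flin f -> f 0 = 0.
Proof.
move=> h; have := h 1 0 0; rewrite !scale1r !addr0 mul1r => e.
by apply: (addrI (f 0)); rewrite addr0 -e.
Qed.
Lemma flinD f u v : flin f -> f (u + v) = f u + f v.
Proof. by move=> h; have := h 1 u v; rewrite !scale1r mul1r. Qed.
Lemma flinZ f a u : flin f -> f (a *: u) = a * f u.
Proof. by move=> h; have := h a u 0; rewrite !addr0 flin0 // addr0. Qed.
Lemma flinB f u v : flin f -> f (u - v) = f u - f v.
Proof. by move=> h; rewrite flinD // -scaleN1r flinZ // mulN1r. Qed.

Definition subsp (W : V -> Prop) :=
  [/\ W 0, (forall u v, W u -> W v -> W (u + v)) & (forall a u, W u -> W (a *: u))].

Lemma subspB W u v : subsp W -> W u -> W v -> W (u - v).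
Proof. by case=> _ hD hZ hu hv; apply: hD => //; rewrite -scaleN1r; apply: hZ. Qed.

Lemma functional (W : V -> Prop) t : subsp W -> ~ W t ->
  exists psi : V -> k, [/\ flin psi, psi t = 1 & forall w, W w -> psi w = 0].
Proof.
move=> sW nWt.
pose P := fun X : V -> Prop => [/\ sub W X, subsp X & ~ X t].
have HP : forall C, (forall X, C X -> P X) ->
  (forall X Y, C X -> C Y -> sub X Y \/ sub Y X) -> P (bigU W C).
  move=> C hC hch.
  case: (classic (exists Z, C Z)) => [[Z0 CZ0]|hn]; last first.
    have E : forall v, bigU W C v -> W v.
      by move=> v [//|[Z [CZ _]]]; case: hn; exists Z.
    split; first by move=> v h; left.
    + case: sW => h0 hD hZ; split; first by left.
      * by move=> u v /E hu /E hv; left; apply: hD.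
      * by move=> a u /E hu; left; apply: hZ.
    + by move=> /E.
  have E : forall v, bigU W C v -> exists Z, C Z /\ Z v.
    move=> v [hv|//]; exists Z0; split => //.
    by case: (hC Z0 CZ0) => h _ _; apply: h.
  split; first by move=> v h; left.
  + split; first by left; case: sW.
    * move=> u v /E [Z1 [C1 h1]] /E [Z2 [C2 h2]]; right.
      case: (hch Z1 Z2 C1 C2) => h.
        exists Z2; split => //; case: (hC Z2 C2) => _ [_ hD _] _.
        by apply: hD => //; apply: h.
      exists Z1; split => //; case: (hC Z1 C1) => _ [_ hD _] _.
      by apply: hD => //; apply: h.
    * move=> a u /E [Z1 [C1 h1]]; right; exists Z1; split => //.
      by case: (hC Z1 C1) => _ [_ _ hZ] _; apply: hZ.
  + move=> /E [Z1 [C1 h1]]; by case: (hC Z1 C1) => _ _; apply.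
have [M [[_ sM nMt] [WM maxM]]] := tukey HP.
have Muniq : forall v c d, M (v - c *: t) -> M (v - d *: t) -> c = d.
  move=> v c d h1 h2; apply: NNPP => ne.
  have h3 := subspB sM h2 h1.
  have e : v - d *: t - (v - c *: t) = (c - d) *: t.
    by rewrite opprB addrC addrA addrNK scalerBl.
  rewrite e in h3.
  case: sM => _ _ hZ; apply: nMt.
  have cd : c - d != 0 by rewrite subr_eq0; apply/eqP.
  by have := hZ (c - d)^-1 _ h3; rewrite scalerA mulVf // scale1r.
have Mex : forall v, exists c, M (v - c *: t).
  move=> v; case: (classic (M v)) => Mv.
    by exists 0; rewrite scale0r subr0.
  pose Y := fun w => exists m a, M m /\ w = m + a *: v.
  case: (classic (Y t)) => [[m [a [Mm ht]]]|nYt]; last first.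
    case: Mv; apply: (maxM Y); last by exists 0, 1; rewrite scale1r add0r; case: sM.
    + split.
      * by move=> w /WM Mw; exists w, 0; rewrite scale0r addr0.
      * case: sM => h0 hD hZ; split.
        -- by exists 0, 0; rewrite scale0r addr0.
        -- move=> u w [m1 [a1 [M1 ->]]] [m2 [a2 [M2 ->]]].
           exists (m1 + m2), (a1 + a2); split; first by apply: hD.
           by rewrite scalerDl addrACA.
        -- move=> b u [m1 [a1 [M1 ->]]]; exists (b *: m1), (b * a1); split.
             by apply: hZ.
           by rewrite scalerDr scalerA.
      * exact: nYt.
    + by move=> w Mw; exists w, 0; rewrite scale0r addr0.
  have a0 : a != 0.
    apply/negP => /eqP a0; apply: nMt; by rewrite ht a0 scale0r addr0.
  exists a^-1.
  have -> : v - a^-1 *: t = (- a^-1) *: m.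
    rewrite ht scalerDr scalerA mulVf // scale1r opprD addrA addrC.
    by rewrite addrA addNr add0r scaleNr.
  by case: sM => _ _; apply.
pose psi v := proj1_sig (constructive_indefinite_description _ (Mex v)).
have psiP : forall v, M (v - psi v *: t).
  by move=> v; exact: proj2_sig (constructive_indefinite_description _ (Mex v)).
exists psi; split.
- move=> a u v; apply: (Muniq (a *: u + v)); first exact: psiP.
  have e : a *: u + v - (a * psi u + psi v) *: t =
           a *: (u - psi u *: t) + (v - psi v *: t).
    by rewrite scalerBr scalerA scalerDl opprD addrACA.
  rewrite e; case: sM => _ hD hZ; apply: hD; last exact: psiP.
  by apply: hZ; apply: psiP.
- apply: (Muniq t); first exact: psiP.
  by rewrite scale1r subrr; case: sM.
- move=> w Ww; apply: (Muniq w); first exact: psiP.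
  by rewrite scale0r subr0; apply: WM.
Qed.
End Lin.

Section Span.
Variables (k : fieldType) (V : lmodType k).

Fixpoint spanL (s : seq V) (v : V) : Prop :=
  match s with [::] => v = 0 | x :: s' => exists c, spanL s' (v - c *: x) end.

Lemma spanL_sub s : subsp (spanL s).
Proof.
elim: s => [|x s [h0 hD hZ]] /=.
  split => //; first by move=> u v -> ->; rewrite addr0.
  by move=> a u ->; rewrite scaler0.
split; first by exists 0; rewrite scale0r subr0.
- move=> u v [c hc] [d hd]; exists (c + d).
  have -> : u + v - (c + d) *: x = (u - c *: x) + (v - d *: x).
    by rewrite scalerDl opprD addrACA.
  exact: hD.
- move=> a u [c hc]; exists (a * c).
  by rewrite -scalerA -scalerBr; apply: hZ.
Qed.

Lemma spanL0 s : spanL s 0. Proof. by case: (spanL_sub s). Qed.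
Lemma spanLD s u v : spanL s u -> spanL s v -> spanL s (u + v).
Proof. by case: (spanL_sub s) => _ h _; apply: h. Qed.
Lemma spanLZ s a u : spanL s u -> spanL s (a *: u).
Proof. by case: (spanL_sub s) => _ _ h; apply: h. Qed.
Lemma spanLB s u v : spanL s u -> spanL s v -> spanL s (u - v).
Proof. by move=> hu hv; apply: subspB => //; apply: spanL_sub. Qed.

Lemma spanL_head x s : spanL (x :: s) x.
Proof. by exists 1; rewrite scale1r subrr; apply: spanL0. Qed.

Lemma spanL_catl s s' u : spanL s u -> spanL (s ++ s') u.
Proof.
elim: s u => [|x s IH] u /=; first by move=> ->; apply: spanL0.
by move=> [c hc]; exists c; apply: IH.
Qed.

Lemma spanL_catr s s' u : spanL s' u -> spanL (s ++ s') u.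
Proof.
elim: s u => [|x s IH] u //= h; exists 0; rewrite scale0r subr0; exact: IH.
Qed.

Lemma spanL_map (g : V -> V) s u : is_linear g -> spanL s u -> spanL (map g s) (g u).
Proof.
move=> lg; elim: s u => [|x s IH] u /=; first by move=> ->; apply: lin0.
by move=> [c hc]; exists c; rewrite -linZ // -linB //; apply: IH.
Qed.

Lemma in_spanE s v : in_span s v <-> spanL s v.
Proof.
elim: s v => [|x s IH] v.
  split; first by case=> c ->; rewrite big_ord0.
  by move=> /= ->; exists (fun _ => 0); rewrite big_ord0.
split.
  case=> c ->; rewrite /= big_ord_recl /=; exists (c ord0).
  rewrite addrC addKr; apply/IH.
  by exists (fun i => c (lift ord0 i)).
case=> c0 /IH [c' hc'].
exists (fun i => match unlift ord0 i with None => c0 | Some j => c' j end).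
rewrite /= big_ord_recl /= unlift_none.
under eq_bigr => i _ do rewrite liftK.
by rewrite -hc' addrC subrK.
Qed.

Definition frank (f : V -> V) := exists s, forall v, spanL s (f v).

Lemma finite_rankE (f : V -> V) : finite_rank f <-> frank f.
Proof.
split; case=> s h; exists s => v; apply/in_spanE; exact: h.
Qed.

Lemma frank_ext (f g : V -> V) : frank f -> (forall v, f v = g v) -> frank g.
Proof. by move=> [s h] e; exists s => v; rewrite -e. Qed.

Lemma frank_add (f g : V -> V) : frank f -> frank g -> frank (fun v => f v + g v).
Proof.
move=> [s hs] [s' hs']; exists (s ++ s') => v; apply: spanLD.
  exact: spanL_catl. exact: spanL_catr.
Qed.

Lemma frank_Z (f : V -> V) c : frank f -> frank (fun v => c *: f v).
Proof. by move=> [s hs]; exists s => v; apply: spanLZ. Qed.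

Lemma frank_compr (f h : V -> V) : frank f -> frank (fun v => f (h v)).
Proof. by move=> [s hs]; exists s. Qed.

Lemma frank_compl (g f : V -> V) : is_linear g -> frank f -> frank (fun v => g (f v)).
Proof. by move=> lg [s hs]; exists (map g s) => v; apply: spanL_map. Qed.

Lemma frank0 : frank (fun _ : V => 0).
Proof. by exists [::]. Qed.

Lemma lin_ext (f g : V -> V) : is_linear f -> (forall v, f v = g v) -> is_linear g.
Proof. by move=> h e a u v; rewrite -!e. Qed.
Lemma lin_add (f g : V -> V) : is_linear f -> is_linear g -> is_linear (fun v => f v + g v).
Proof. by move=> hf hg a u v; rewrite hf hg scalerDr addrACA. Qed.
Lemma lin_opp (f : V -> V) : is_linear f -> is_linear (fun v => - f v).
Proof. by move=> hf a u v; rewrite hf opprD scalerN. Qed.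
Lemma lin_comp (f g : V -> V) : is_linear f -> is_linear g -> is_linear (fun v => f (g v)).
Proof. by move=> hf hg a u v; rewrite hg hf. Qed.
Lemma lin_scal c : is_linear (fun v : V => c *: v).
Proof. by move=> a u v; rewrite scalerDr !scalerA mulrC. Qed.
Lemma lin_id : is_linear (fun v : V => v).
Proof. by []. Qed.
Lemma lin_zero : is_linear (fun _ : V => 0).
Proof. by move=> a u v; rewrite scaler0 addr0. Qed.
Lemma lin_rk (phi : V -> k) w : flin phi -> is_linear (fun v => phi v *: w).
Proof. by move=> h a u v; rewrite h scalerDl scalerA. Qed.

Lemma frank_rk (phi : V -> k) w : frank (fun v => phi v *: w).
Proof. by exists [:: w] => v /=; exists (phi v); rewrite subrr. Qed.

Notation S := (finrank_endo V).
Notation R := (scalar_plus_finrank V).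

Lemma SE (f : V -> V) : S f <-> is_linear f /\ frank f.
Proof. by split; case=> h1 h2; split => //; apply/finite_rankE. Qed.

Lemma S_ext (f g : V -> V) : S f -> (forall v, f v = g v) -> S g.
Proof.
move=> /SE [h1 h2] e; apply/SE; split; first exact: lin_ext e.
exact: frank_ext e.
Qed.

Lemma RE (x : V -> V) : R x <-> is_linear x /\ exists c, S (fun v => x v - c *: v).
Proof. by []. Qed.

Lemma R_mk (x : V -> V) c (s : V -> V) : is_linear x -> S s -> (forall v, x v = c *: v + s v) -> R x.
Proof.
move=> lx Ss e; split => //; exists c; apply: S_ext Ss _ => v.
by rewrite /eadd /eopp /escal e addrC addKr.
Qed.

Lemma R_dec (x : V -> V) : R x -> is_linear x /\ exists c s, S s /\ forall v, x v = c *: v + s v.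
Proof.
case=> lx [c Sc]; split => //; exists c, (fun v => x v - c *: v); split => //.
by move=> v; rewrite addrC subrK.
Qed.

Lemma S_R (f : V -> V) : S f -> R f.
Proof.
move=> Sf; apply: (@R_mk f 0 f); first by case: Sf.
  by [].
by move=> v; rewrite scale0r add0r.
Qed.

Lemma S_add (f g : V -> V) : S f -> S g -> S (eadd f g).
Proof.
move=> /SE [l1 r1] /SE [l2 r2]; apply/SE; split; first exact: lin_add.
exact: frank_add.
Qed.

Lemma S_opp (f : V -> V) : S f -> S (eopp f).
Proof.
move=> /SE [l1 r1]; apply/SE; split; first exact: lin_opp.
by apply: (frank_ext (frank_Z (-1) r1)) => v; rewrite scaleN1r.
Qed.

Lemma S_zero : S (@ezero V).
Proof. apply/SE; split; [exact: lin_zero | exact: frank0]. Qed.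

Lemma S_mulr (f r : V -> V) : S f -> is_linear r -> S (emul f r).
Proof.
move=> /SE [l1 r1] lr; apply/SE; split; first exact: lin_comp.
exact: frank_compr.
Qed.

Lemma S_mull (r f : V -> V) : R r -> S f -> S (emul r f).
Proof.
move=> /R_dec [lr [c [s [Ss e]]]] /SE [l1 r1]; apply/SE; split.
  exact: lin_comp.
case/SE: Ss => ls rs.
apply: (frank_ext (frank_add (frank_Z c r1) (frank_compl ls r1))).
by move=> v; rewrite /emul e.
Qed.

Lemma S_rk (phi : V -> k) w : flin phi -> S (fun v => phi v *: w).
Proof. move=> h; apply/SE; split; [exact: lin_rk | exact: frank_rk]. Qed.

Lemma R_lin (x : V -> V) : R x -> is_linear x.
Proof. by case. Qed.

Lemma R_escal c : R (@escal k V c).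
Proof.
apply: (@R_mk _ c ezero); [exact: lin_scal | exact: S_zero |].
by move=> v; rewrite /ezero addr0.
Qed.

Lemma R_add (x y : V -> V) : R x -> R y -> R (eadd x y).
Proof.
move=> /R_dec [lx [c [s [Ss ex]]]] /R_dec [ly [d [t [St ey]]]].
apply: (@R_mk _ (c + d) (eadd s t)); [exact: lin_add | exact: S_add |].
by move=> v; rewrite /eadd ex ey scalerDl addrACA.
Qed.

Lemma R_opp (x : V -> V) : R x -> R (eopp x).
Proof.
move=> /R_dec [lx [c [s [Ss ex]]]].
apply: (@R_mk _ (- c) (eopp s)); [exact: lin_opp | exact: S_opp |].
by move=> v; rewrite /eopp ex opprD scaleNr.
Qed.

Lemma R_mul (x y : V -> V) : R x -> R y -> R (emul x y).
Proof.
move=> Rx Ry; have /R_dec [lx [c [s [Ss ex]]]] := Rx.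
have /R_dec [ly [d [t [St ey]]]] := Ry.
apply: (@R_mk _ (c * d) (eadd (emul s y) (escal c \o t))).
- exact: lin_comp.
- apply: S_add; first by apply: S_mulr.
  apply: (@S_ext (emul (escal c) t)); last by [].
  by apply: S_mull => //; apply: R_escal.
- move=> v; rewrite /emul /eadd /escal /= ex ey scalerDr scalerA.
  by rewrite -addrA [X in _ + X]addrC.
Qed.

Lemma R_one : R (@eone V).
Proof.
apply: (@R_mk _ 1 ezero); [exact: lin_id | exact: S_zero |].
by move=> v; rewrite /ezero addr0 scale1r.
Qed.

Lemma R_zero : R (@ezero V).
Proof. by apply: S_R; apply: S_zero. Qed.

End Span.

Section Main.
Variables (k : fieldType) (V : lmodType k).
Hypothesis Hinf : infinite_dim V.
Notation S := (finrank_endo V).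
Notation R := (scalar_plus_finrank V).

Lemma exists_nz : exists v : V, v != 0.
Proof.
have [v hv] := Hinf [::]; exists v; apply/eqP => e; apply: hv.
by apply/in_spanE.
Qed.

Lemma eone_notS : ~ S eone.
Proof.
move=> /SE [_ [s hs]]; have [v hv] := Hinf s; apply: hv; apply/in_spanE.
exact: hs.
Qed.

Lemma nz_pt (x : V -> V) : x <> ezero -> exists v, x v != 0.
Proof.
move=> h; apply: NNPP => hn; apply: h; apply: functional_extensionality => v.
by apply/eqP; apply: NNPP => h'; apply: hn; exists v; apply/negP.
Qed.

Lemma fun_ex (t : V) : t != 0 -> exists psi : V -> k, flin psi /\ psi t = 1.
Proof.
move=> nt; have sW : subsp (fun w : V => w = 0).
  split => //; first by move=> u v -> ->; rewrite addr0.
  by move=> a u ->; rewrite scaler0.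
have [psi [h1 h2 _]] := functional sW (fun e => negP nt (introT eqP e)).
by exists psi.
Qed.

Lemma flin_scal (psi : V -> k) c : flin psi -> flin (fun v => c * psi v).
Proof. by move=> h a u v; rewrite h mulrDr mulrCA. Qed.

Lemma rk_R (psi : V -> k) w : flin psi -> R (fun v => psi v *: w).
Proof. by move=> h; apply: S_R; apply: S_rk. Qed.

Lemma ideal_S (I : (V -> V) -> Prop) x : is_ideal R I -> I x -> x <> ezero ->
  forall f, S f -> I f.
Proof.
move=> [IR [I0 [ID [IN [IL IRr]]]]] Ix nx.
have [v0 hv0] := nz_pt nx.
have [psi [lpsi p1]] := fun_ex hv0.
have lx := R_lin (IR _ Ix).
have rk : forall (phi : V -> k) w, flin phi -> I (fun v => phi v *: w).
  move=> phi w lphi.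
  have h := IL _ _ (rk_R w lpsi) (IRr _ _ (rk_R v0 lphi) Ix).
  suff -> : (fun v => phi v *: w) =
     emul (fun v => psi v *: w) (emul x (fun v => phi v *: v0)) by [].
  apply: functional_extensionality => v.
  by rewrite /emul linZ // flinZ // p1 mulr1.
suff H : forall s f, is_linear f -> (forall v, spanL s (f v)) -> I f.
  by move=> f /SE [lf [s hs]]; apply: (H s).
elim=> [|y s IH] f lf hs.
  suff -> : f = ezero by [].
  by apply: functional_extensionality => v; apply: hs.
case: (classic (spanL s y)) => hy.
  apply: (IH f lf) => v; have [c hc] := hs v.
  have -> : f v = (f v - c *: y) + c *: y by rewrite subrK.
  by apply: spanLD => //; apply: spanLZ.
have [psi2 [lp2 p21 p20]] := functional (spanL_sub s) hy.
pose phi v := psi2 (f v).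
have lphi : flin phi by move=> a u v; rewrite /phi lf lp2.
pose f' v := f v - phi v *: y.
have lf' : is_linear f'.
  by apply: lin_add => //; apply: lin_opp; apply: lin_rk.
have hf' : forall v, spanL s (f' v).
  move=> v; have [c hc] := hs v.
  suff e : phi v = c by rewrite /f' e.
  have := p20 _ hc; rewrite flinB // flinZ // p21 mulr1 => /eqP.
  by rewrite subr_eq0 => /eqP.
have := ID _ _ (rk phi y lphi) (IH f' lf' hf').
suff -> : eadd (fun v => phi v *: y) f' = f by [].
by apply: functional_extensionality => v; rewrite /eadd /f' addrC subrK.
Qed.

Lemma one_in (A : (V -> V) -> Prop) x : (forall s, S s -> A s) ->
  (forall f g, A f -> A g -> A (eadd f g)) -> (forall f, A f -> A (eopp f)) ->
  (forall a r, A a -> R r -> A (emul a r)) -> A x -> R x -> ~ S x -> A eone.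
Proof.
move=> AS AD AN AM Ax Rx nSx.
have [lx [c [s [Ss e]]]] := R_dec Rx.
have c0 : c != 0.
  apply/negP => /eqP c0; apply: nSx; apply: S_ext Ss _ => v.
  by rewrite e c0 scale0r add0r.
have h := AM _ _ (AD _ _ Ax (AN _ (AS _ Ss))) (@R_escal _ V c^-1).
suff <- : emul (eadd x (eopp s)) (escal c^-1) = eone by [].
apply: functional_extensionality => v.
by rewrite /emul /eadd /eopp /escal /eone e addrK scalerA mulfV // scale1r.
Qed.

Lemma ideal_class (I : (V -> V) -> Prop) : is_ideal R I ->
  [\/ (forall x, I x <-> x = ezero), (forall x, I x <-> S x) | (forall x, I x <-> R x)].
Proof.
move=> hI; have [IR [I0 [ID [IN [IL IRr]]]]] := hI.
case: (classic (forall x, I x -> x = ezero)) => h0.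
  by constructor 1 => x; split; [exact: h0 | move=> ->].
have [x [Ix nx]] : exists x, I x /\ x <> ezero.
  apply: NNPP => hn; apply: h0 => x Ix; apply: NNPP => nx; apply: hn; by exists x.
have SI := ideal_S hI Ix nx.
case: (classic (forall x, I x -> S x)) => hS.
  by constructor 2 => y; split; [exact: hS | exact: SI].
have [y [Iy nSy]] : exists y, I y /\ ~ S y.
  apply: NNPP => hn; apply: hS => y Iy; apply: NNPP => nS; apply: hn; by exists y.
have I1 : I eone.
  apply: (one_in SI ID IN _ Iy (IR _ Iy) nSy) => a r Ia Rr; exact: IRr.
constructor 3 => z; split; first exact: IR.
by move=> Rz; apply: (IL _ _ Rz I1).
Qed.

Lemma is_ideal_iff (I J : (V -> V) -> Prop) : (forall x, I x <-> J x) ->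
  is_ideal R J -> is_ideal R I.
Proof.
move=> e [h1 [h2 [h3 [h4 [h5 h6]]]]]; split; first by move=> x /e /h1.
split; first by apply/e.
split; first by move=> x y /e hx /e hy; apply/e; apply: h3.
split; first by move=> x /e hx; apply/e; apply: h4.
split; first by move=> r x Rr /e hx; apply/e; apply: h5.
by move=> r x Rr /e hx; apply/e; apply: h6.
Qed.

Lemma ideal_zero : is_ideal R (fun x => x = ezero).
Proof.
split; first by move=> x ->; apply: R_zero.
split => //.
split; first by move=> x y -> ->; apply: functional_extensionality => v; rewrite /eadd addr0.
split; first by move=> x ->; apply: functional_extensionality => v; rewrite /eopp oppr0.
split; last by move=> r x _ ->.
move=> r x Rr ->; apply: functional_extensionality => v.
by rewrite /emul /ezero lin0 //; apply: R_lin.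
Qed.

Lemma ideal_SS : is_ideal R S.
Proof.
split; first exact: S_R.
split; first exact: S_zero.
split; first exact: S_add.
split; first exact: S_opp.
split; first by move=> r x Rr Sx; apply: S_mull.
by move=> r x Rr Sx; apply: S_mulr => //; apply: R_lin.
Qed.

Lemma ideal_RR : is_ideal R R.
Proof.
split => //; split; first exact: R_zero.
split; first exact: R_add.
split; first exact: R_opp.
split; by move=> r x h1 h2; apply: R_mul.
Qed.

Lemma prime_R : prime_ring R.
Proof.
split.
  have [v nv] := exists_nz => e; have := f_equal (fun f => f v) e.
  by rewrite /eone /ezero /= => ev; rewrite ev eqxx in nv.
move=> a b Ra Rb h; apply: NNPP => hn.
have na : a <> ezero by move=> e; apply: hn; left.
have nb : b <> ezero by move=> e; apply: hn; right.
have [u hu] := nz_pt na; have [v hv] := nz_pt nb.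
have [psi [lpsi p1]] := fun_ex hv.
have := f_equal (fun f => f v) (h _ (rk_R u lpsi)).
rewrite /emul /ezero /= p1 scale1r => e.
by rewrite e eqxx in hu.
Qed.

Section ModS.
Variable I : (V -> V) -> Prop.
Hypothesis IS : forall x, I x <-> S x.

Lemma I_rideal : is_rideal_mod R I I.
Proof.
split => //.
- by move=> x /IS /S_R.
- by move=> x y /IS h1 /IS h2; apply/IS; apply: S_add.
- by move=> x /IS h1; apply/IS; apply: S_opp.
- by move=> a r /IS h1 Rr; apply/IS; apply: S_mulr => //; apply: R_lin.
Qed.

Lemma rid_dich (A : (V -> V) -> Prop) : is_rideal_mod R I A ->
  (forall x, A x -> S x) \/ A eone.
Proof.
case=> AR AI AD AN AM.
case: (classic (forall x, A x -> S x)) => h; first by left.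
right; have [y [Ay nSy]] : exists y, A y /\ ~ S y.
  apply: NNPP => hn; apply: h => y Ay; apply: NNPP => nS; apply: hn; by exists y.
apply: (one_in _ AD AN AM Ay (AR _ Ay) nSy) => s /IS; exact: AI.
Qed.

Lemma I_max : maximal_rideal_mod R I I.
Proof.
split; first exact: I_rideal.
  by move=> /IS; apply: eone_notS.
move=> N hN sub1 nN x Nx; apply/IS.
by case: (rid_dich hN) => [h|//]; apply: h.
Qed.

Lemma Jac_S x : Jac_mod R I x <-> S x.
Proof.
split; first by case=> _ h; apply/IS; apply: h; apply: I_max.
move=> Sx; split; first exact: S_R.
by move=> M [[_ MI _ _ _] _ _]; apply: MI; apply/IS.
Qed.

Lemma K_rideal : is_rideal_mod R (Jac_mod R I) (Jac_mod R I).
Proof.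
case: I_rideal => h1 _ h3 h4 h5; split => //.
- by move=> x /Jac_S /IS /h1.
- by move=> x y /Jac_S /IS a /Jac_S /IS b; apply/Jac_S/IS; apply: h3.
- by move=> x /Jac_S /IS a; apply/Jac_S/IS; apply: h4.
- by move=> a r /Jac_S /IS a' Rr; apply/Jac_S/IS; apply: h5.
Qed.

Lemma rid_dichK (A : (V -> V) -> Prop) : is_rideal_mod R (Jac_mod R I) A ->
  (forall x, A x -> S x) \/ A eone.
Proof.
case=> AR AI AD AN AM; apply: rid_dich; split => //.
by move=> x /IS /Jac_S; apply: AI.
Qed.

Lemma full_of_one (K A : (V -> V) -> Prop) : is_rideal_mod R K A -> A eone ->
  forall x, R x -> A x.
Proof. by case=> _ _ _ _ AM h x Rx; apply: (AM _ _ h Rx). Qed.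

Lemma semilocal_S : semilocal_mod R I.
Proof.
split.
- move=> A hA; case: (rid_dichK hA) => h.
    exists R; split.
    + split; [by [] | by move=> x [] | exact: R_add | exact: R_opp | ].
      by move=> a r; apply: R_mul.
    + move=> x Rx; exists ezero, x; split => //.
        by case: hA => _ AI _ _ _; apply: AI; apply/Jac_S; apply: S_zero.
      by apply: functional_extensionality => v; rewrite /eadd /ezero add0r.
    + by move=> x /h Sx _; apply/Jac_S.
  exists (Jac_mod R I); split; first exact: K_rideal.
  + move=> x Rx; exists x, ezero; split.
    * exact: full_of_one hA h x Rx.
    * by apply/Jac_S; apply: S_zero.
    * by apply: functional_extensionality => v; rewrite /eadd /ezero addr0.
  + by [].
- move=> A hA hdec.
  case: (classic (exists N, forall x, A N x -> S x)) => [[N hN]|hn].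
    exists N => n _ x /hN Sx; case: (hA n) => _ AI _ _ _; apply: AI.
    exact/Jac_S.
  exists 0%N => n _ x Ax.
  have A1 : A n eone.
    case: (rid_dichK (hA n)) => // h; case: hn; exists n; exact: h.
  apply: (full_of_one (hA n) A1); by case: (hA 0%N) => h _ _ _ _; apply: h.
Qed.

Lemma rperfect_S : rperfect_mod R I.
Proof.
split; first exact: semilocal_S.
by move=> a ha; exists 0%N => /=; apply/IS/Jac_S.
Qed.

Lemma lperfect_S : lperfect_mod R I.
Proof.
split; first exact: semilocal_S.
by move=> a ha; exists 0%N => /=; apply/IS/Jac_S.
Qed.
End ModS.

Lemma IS_of (I : (V -> V) -> Prop) : is_ideal R I -> ~ (forall x, I x <-> x = ezero) ->
    ~ (forall x, R x -> I x) -> forall x, I x <-> S x.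
Proof.
move=> hI h1 h2; case: (ideal_class hI) => // h; case: h2 => x /h //.
Qed.

Lemma Jac_zero x : Jac R x <-> x = ezero.
Proof.
split; last first.
  move=> ->; split; first exact: R_zero.
  by move=> M [[_ MI _ _ _] _ _]; apply: MI.
case=> Rx hJ; apply: NNPP => nx.
have [v hv] := nz_pt nx.
have [psi [lpsi p1]] := fun_ex hv.
pose M := fun r => R r /\ forall u, psi (r u) = 0.
have Mx : M x.
apply: hJ; split.
- split.
  + by move=> r [].
  + move=> r ->; split; first exact: R_zero.
    by move=> u; rewrite /ezero flin0.
  + move=> a b [Ra ha] [Rb hb]; split; first exact: R_add.
    by move=> u; rewrite /eadd flinD // ha hb addr0.
  + move=> a [Ra ha]; split; first exact: R_opp.
    by move=> u; rewrite /eopp -scaleN1r flinZ // ha mulr0.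
  + move=> a r [Ra ha] Rr; split; first exact: R_mul.
    by move=> u; rewrite /emul ha.
- case=> _ h.
  move: (h (x v)); rewrite /eone p1 => /eqP; by rewrite oner_eq0.
- move=> N hN sMN nN y Ny; apply: NNPP => nMy.
  have Ry : R y by case: hN => h _ _ _ _; apply: h.
  have [u hu] : exists u, psi (y u) != 0.
    apply: NNPP => hn; apply: nMy; split => // u; apply: NNPP.
    by move=> h'; apply: hn; exists u; apply/eqP.
  pose a := psi (y u).
  pose z := fun w => (a^-1 * psi w) *: u.
  have Rz : R z by apply: rk_R; apply: flin_scal.
  case: hN => NR N0 ND NN NM.
  have Nyz := NM _ _ Ny Rz.
  have Mm : M (eadd eone (eopp (emul y z))).
    split; first by apply: R_add; [exact: R_one | apply: R_opp; apply: R_mul].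
    move=> w; rewrite /eadd /eone /eopp /emul /z.
    rewrite flinD // -scaleN1r flinZ // linZ; last exact: R_lin.
    rewrite flinZ // -/a mulrAC mulVf // mul1r mulN1r subrr //.
  apply: nN; have := ND _ _ Nyz (sMN _ Mm).
  suff -> : eadd (emul y z) (eadd eone (eopp (emul y z))) = eone by [].
  by apply: functional_extensionality => w; rewrite /eadd addrC subrK.
case: Mx => _ h; move: (h v); rewrite p1 => /eqP; by rewrite oner_eq0.
Qed.

Lemma not_semilocal : ~ semilocal R.
Proof.
case=> hss _.
have hA : is_rideal_mod R (Jac R) S.
  split; first exact: S_R.
  + by move=> x /Jac_zero ->; apply: S_zero.
  + exact: S_add.
  + exact: S_opp.
  + by move=> a r Sa Rr; apply: S_mulr => //; apply: R_lin.
have [B [hB hdec hint]] := hss _ hA.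
have [a [b [Sa Bb e]]] := hdec _ (@R_one _ V).
have eb : forall v, b v = v - a v.
  move=> v; have := f_equal (fun f => f v) e; rewrite /eone /eadd /= => ev.
  by apply/eqP; rewrite eq_sym subr_eq addrC -ev.
have /SE [la [l hl]] := Sa.
have [w hw] := Hinf l.
have [t nt] := exists_nz.
have [psi [lpsi p1]] := fun_ex nt.
pose s := fun v => psi v *: w.
have Ss : S s by apply: S_rk.
have Bbs : B (emul b s) by case: hB => _ _ _ _ BM; apply: BM => //; apply: S_R.
have Sbs : S (emul b s).
  have h : S (eadd s (eopp (emul a s))).
    apply: S_add => //; apply: S_opp; apply: S_mulr => //; by case: Ss.
  by apply: (S_ext h) => v; rewrite /emul /eadd /eopp eb.
have /Jac_zero E := hint _ Sbs Bbs.
have := f_equal (fun f => f t) E; rewrite /emul /ezero /= eb /s p1 scale1r.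
move=> /eqP; rewrite subr_eq0 => /eqP ew.
apply: hw; apply/in_spanE; rewrite ew; exact: hl.
Qed.

End Main.

Unset Implicit Arguments. Set Strict Implicit.

Theorem mainTheorem11 (k : fieldType) (V : lmodType k) (Hinf : infinite_dim V) :
  let S := finrank_endo V in
  let R := scalar_plus_finrank V in
  [/\ (forall I, is_ideal R I <->
         [\/ (forall x, I x <-> x = ezero),
             (forall x, I x <-> S x) |
             (forall x, I x <-> R x)]),
      prime_ring R,
      ralmost_perfect R /\ lalmost_perfect R,
      (forall x, Jac R x <-> x = ezero) &
      [/\ ~ semilocal R, ~ rperfect R & ~ lperfect R]].
Proof.
move=> S R; have nsl := not_semilocal Hinf.
split.
- move=> I; split; first exact: ideal_class.
  case=> h; [exact: (is_ideal_iff h (ideal_zero V)) | exact: (is_ideal_iff h (ideal_SS V))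
            | exact: (is_ideal_iff h (ideal_RR V))].
- exact: prime_R Hinf.
- split => I hI h1 h2; [apply: (rperfect_S Hinf) | apply: (lperfect_S Hinf)]; exact: IS_of hI h1 h2.
- exact: Jac_zero.
- by split => // -[].
Qed.
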